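(* There exist maps $f_r$ and $f_c$, where $f_r$ assigns to each $n\times n$ matrix $R$ with entries in $[0,1]$ a mixed strategy (probability distribution over rows) and $f_c$ assigns to each $n\times n$ matrix $C$ with entries in $[0,1]$ a mixed strategy (probability distribution over columns), such that for every $n$ and every bimatrix game $(R,C)$ with $R,C\in[0,1]^{n\times n}$, the profile $(f_r(R),f_c(C))$ is a $\frac{3}{4}$-approximate Nash equilibrium of $(R,C)$. (That is, a $\frac34$-approximate Nash equilibrium can be guaranteed even with no communication between the players.)
   Context: A bimatrix game $(R,C)$ consists of two $n\times n$ payoff matrices: $R$ for the row player, $C$ for the column player, with entries in $[0,1]$. Mixed strategies are probability vectors $\mathbf{x}$ (over rows) and $\mathbf{y}$ (over columns); payoffs are $\mathbf{x}^T R\mathbf{y}$ and $\mathbf{x}^T C\mathbf{y}$. Writing $\mathbf{e}_i$ for the $i$-th unit vector, $(\mathbf{x},\mathbf{y})$ is an $\epsilon$-approximate Nash equilibrium if for all $i$: $\mathbf{e}_i^T R\mathbf{y}\le \mathbf{x}^T R\mathbf{y}+\epsilon$ and $\mathbf{x}^T C\mathbf{e}_i\le \mathbf{x}^T C\mathbf{y}+\epsilon$. *)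

(* Defs.v *)
From HB Require Import structures.
From mathcomp Require Import all_boot all_order all_algebra.
From mathcomp Require Import reals.
Set Implicit Arguments. Unset Strict Implicit. Unset Printing Implicit Defensive.
Import Order.TTheory GRing.Theory Num.Theory.
Local Open Scope ring_scope.

Definition unit_matrix (R : realType) (n : nat) (A : 'M[R]_n) : Prop :=
  forall i j, 0 <= A i j /\ A i j <= 1.

Definition mixed_strategy (R : realType) (n : nat) (x : 'I_n -> R) : Prop :=
  (forall i, 0 <= x i) /\ \sum_(i < n) x i = 1.

Definition payoff (R : realType) (n : nat) (A : 'M[R]_n) (x y : 'I_n -> R) : R :=
  \sum_(i < n) \sum_(j < n) x i * A i j * y j.

Definition row_payoff (R : realType) (n : nat) (A : 'M[R]_n) (i : 'I_n) (y : 'I_n -> R) : R :=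
  \sum_(j < n) A i j * y j.
Definition col_payoff (R : realType) (n : nat) (A : 'M[R]_n) (x : 'I_n -> R) (j : 'I_n) : R :=
  \sum_(i < n) x i * A i j.

Definition approx_NE (R : realType) (n : nat) (eps : R) (Rm Cm : 'M[R]_n)
    (x y : 'I_n -> R) : Prop :=
  (forall i, row_payoff Rm i y <= payoff Rm x y + eps) /\
  (forall j, col_payoff Cm x j <= payoff Cm x y + eps).

(* Main.v *)
Require Import Defs.
From HB Require Import structures.
From mathcomp Require Import all_boot all_order all_algebra.
From mathcomp Require Import reals.
From mathcomp Require Import ring lra.
Set Implicit Arguments. Unset Strict Implicit.
Import Order.TTheory GRing.Theory Num.Theory.
Local Open Scope ring_scope.

Section S.
Variable R : realType.

Definition best n (s : 'I_n -> R) := [pick k | [forall l, s l <= s k]].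
Definition strat n (s : 'I_n -> R) : 'I_n -> R :=
  fun i => (if best s == Some i then 2^-1 else 0) + (n%:R)^-1 / 2.

Lemma best_spec n (s : 'I_n -> R) : (0 < n)%N ->
  exists a, best s = Some a /\ forall l, s l <= s a.
Proof.
move=> n0; rewrite /best; case: pickP => [a /forallP Ha|H].
  by exists a.
exfalso; pose i0 := Ordinal n0.
case: (@arg_maxP _ _ _ i0 xpredT s erefl) => a _ Ha.
have := H a; rewrite /=; move/negbT/negP; apply; apply/forallP => l; exact: Ha.
Qed.

Lemma strat_ms n (s : 'I_n -> R) : (0 < n)%N -> mixed_strategy (strat s).
Proof.
move=> n0; have [a [Ea _]] := best_spec s n0.
have nz : (n%:R : R) != 0 by rewrite pnatr_eq0 -lt0n.
split.
  move=> i; rewrite /strat; apply: addr_ge0; first by case: ifP => _ //; rewrite invr_ge0 ler0n.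
  by apply: divr_ge0; rewrite ?invr_ge0 ler0n.
rewrite /strat big_split /= sumr_const card_ord (bigD1 a) //= Ea eqxx.
rewrite big1 ?addr0; last by move=> i Hi; case: eqP => // [[]] E; rewrite E eqxx in Hi.
rewrite -mulr_natr; by field.
Qed.

Lemma bounds n (A : 'M[R]_n) (x y : 'I_n -> R) a c (i : 'I_n) : unit_matrix A -> (0 < n)%N ->
  (forall i, x i = (if a == i then 2^-1 else 0) + n%:R^-1 / 2) ->
  (forall j, y j = (if c == j then 2^-1 else 0) + n%:R^-1 / 2) ->
  (forall l, \sum_j A l j <= \sum_j A a j) ->
  row_payoff A i y <= payoff A x y + 3 / 4.
Proof.
move=> hA n0 Hx Hy Ha.
set k := (n%:R^-1 / 2 : R).
have nz : (n%:R : R) != 0 by rewrite pnatr_eq0 -lt0n.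
have k0 : 0 <= k by apply: divr_ge0; rewrite ?invr_ge0 ler0n.
have x0 : forall i, 0 <= x i.
  by move=> l; rewrite Hx; apply: addr_ge0 => //; case: ifP => _ //; rewrite invr_ge0 ler0n.
have y0 : forall i, 0 <= y i.
  by move=> l; rewrite Hy; apply: addr_ge0 => //; case: ifP => _ //; rewrite invr_ge0 ler0n.
set sa := \sum_j A a j.
have san : sa <= n%:R.
  rewrite /sa -[n in n%:R]card_ord -sumr_const; apply: ler_sum => j _; exact: (hA a j).2.
have ksa : k * sa <= 2^-1.
  have : k * sa <= k * n%:R by apply: ler_wpM2l.
  have -> : k * n%:R = 2^-1 by rewrite /k; field.
  done.
have ksa0 : 0 <= k * sa.
  apply: mulr_ge0 => //; apply: sumr_ge0 => j _; exact: (hA a j).1.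
have E1 : row_payoff A i y = A i c * 2^-1 + (\sum_j A i j) * k.
  rewrite /row_payoff; under eq_bigr do rewrite Hy mulrDr.
  rewrite big_split /= -mulr_suml (bigD1 c) //= eqxx big1 ?addr0 //.
  by move=> j Hj; rewrite eq_sym (negbTE Hj) mulr0.
have E2 : row_payoff A i y <= 2^-1 + k * sa.
  rewrite E1 mulrC [_ * k]mulrC; apply: lerD; last by apply: ler_wpM2l.
  have := (hA i c).2; lra.
have E3 : 2^-1 * (k * sa) <= payoff A x y.
  rewrite /payoff (bigD1 a) //=.
  have r0 : 0 <= \sum_(i0 | i0 != a) \sum_j x i0 * A i0 j * y j.
    apply: sumr_ge0 => l _; apply: sumr_ge0 => j _; apply: mulr_ge0; last exact: y0.
    apply: mulr_ge0; [exact: x0 | exact: (hA l j).1].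
  apply: (@le_trans _ _ (\sum_j x a * A a j * y j)); last by rewrite lerDl.
  rewrite /sa mulr_sumr mulr_sumr; apply: ler_sum => j _.
  rewrite Hx Hy eqxx.
  have hj := hA a j.
  have h1 : 2^-1 <= 2^-1 + k by lra.
  have h2 : k <= (if c == j then 2^-1 else 0) + k.
    by case: ifP => _; lra.
  have : 2^-1 * A a j * k <= (2^-1 + k) * A a j * ((if c == j then 2^-1 else 0) + k).
    apply: ler_pM => //.
    - by apply: mulr_ge0 => //; case: hj; lra.
    - by apply: ler_pM => //; [lra|case: hj]; lra.
  have -> : 2^-1 * (k * A a j) = 2^-1 * A a j * k by ring.
  done.
lra.
Qed.

Lemma payoff_tr n (A : 'M[R]_n) x y : payoff A x y = payoff A^T y x.
Proof.
rewrite /payoff exchange_big /=; apply: eq_bigr => j _; apply: eq_bigr => i _.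
by rewrite mxE; ring.
Qed.

Lemma col_tr n (A : 'M[R]_n) x j : col_payoff A x j = row_payoff A^T j x.
Proof. by rewrite /col_payoff /row_payoff; apply: eq_bigr => i _; rewrite mxE mulrC. Qed.

Lemma strat_eq n (s : 'I_n -> R) a : best s = Some a ->
  forall i, strat s i = (if a == i then 2^-1 else 0) + n%:R^-1 / 2.
Proof. by move=> E i; rewrite /strat E (inj_eq (@Some_inj _)). Qed.
End S.

Theorem theorem1 (R : realType) :
  exists (fr : forall n : nat, 'M[R]_n -> ('I_n -> R))
         (fc : forall n : nat, 'M[R]_n -> ('I_n -> R)),
  forall (n : nat) (Rm Cm : 'M[R]_n), (0 < n)%N ->
    unit_matrix Rm -> unit_matrix Cm ->
    [/\ mixed_strategy (fr n Rm), mixed_strategy (fc n Cm)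
      & approx_NE (3 / 4) Rm Cm (fr n Rm) (fc n Cm)].
Proof.
exists (fun n A => strat (fun i => \sum_j A i j)).
exists (fun n A => strat (fun j => \sum_i A i j)).
move=> n Rm Cm n0 hR hC.
split; try exact: strat_ms.
have [a [Ea Ha]] := best_spec (fun i => \sum_j Rm i j) n0.
have [c [Ec Hc]] := best_spec (fun j => \sum_i Cm i j) n0.
split.
  move=> i; apply: (bounds (a := a) (c := c)) => //; exact: strat_eq.
move=> j; rewrite col_tr payoff_tr.
apply: (bounds (a := c) (c := a)) => //; try exact: strat_eq.
- by move=> k l; rewrite mxE; exact: hC.
- by move=> l; under eq_bigr do rewrite mxE; under [X in _ <= X]eq_bigr do rewrite mxE; exact: Hc.
Qed.
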